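(* Let $\epsilon\in(0,1)$ and for $i=2,\dots,n$ let $0<p_i<q_i<+\infty$; write $(p,q)=(p_2,q_2)\times\cdots\times(p_n,q_n)$ and let $\psi:(0,\epsilon)\times(p,q)\to\mathbb{R}^n$, $\psi(t)=(t_1,t_1^{t_2},\dots,t_1^{t_n})$. Let $\beta\in\mathbb{Q}^n\setminus\{0\}$ be such that $\psi(t)^\beta=\prod_{i}\psi_i(t)^{\beta_i}$ is bounded on $(0,\epsilon)\times(p,q)$. Then there exist $p_i\le p'_i<q'_i\le q_i$ ($i=2,\dots,n$) such that, with $(p',q')=\prod_{i=2}^n(p'_i,q'_i)$, $\psi(t)^\beta\to0$ as $t_1\to0$ uniformly in $(t_2,\dots,t_n)\in(p',q')$. *)

(* Defs.v *)
From HB Require Import structures.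
From mathcomp Require Import all_boot all_order all_algebra.
From mathcomp Require Import all_classical all_reals all_analysis.
Set Implicit Arguments. Unset Strict Implicit. Unset Printing Implicit Defensive.
Import Order.TTheory GRing.Theory Num.Theory.
Local Open Scope ring_scope.

(* Coordinates of R^(n+1) are indexed by 'I_n.+1; coordinate ord0 is t_1 and
   coordinate lift ord0 j (j : 'I_n) is t_(j+2).  The "tail" variables
   (t_2,...,t_(n+1)) are a function s : 'I_n -> R. *)

Definition psi (R : realType) (n : nat) (t1 : R) (s : 'I_n -> R) : 'I_n.+1 -> R :=
  fun i => if unlift ord0 i is Some j then t1 `^ (s j) else t1.

Definition psi_pow (R : realType) (n : nat) (beta : 'I_n.+1 -> rat)
  (t1 : R) (s : 'I_n -> R) : R :=
  \prod_(i < n.+1) (psi t1 s i) `^ (ratr (beta i)).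

Definition in_box (R : realType) (n : nat) (p q s : 'I_n -> R) : Prop :=
  forall j, p j < s j < q j.

(* Main.v *)
Require Import Defs.
From HB Require Import structures.
From mathcomp Require Import all_boot all_order all_algebra.
From mathcomp Require Import all_classical all_reals all_analysis.
From mathcomp Require Import ring lra.
Import Order.TTheory GRing.Theory Num.Theory.
Set Implicit Arguments. Unset Strict Implicit.
Local Open Scope ring_scope.

Definition Lf (R : realType) n (beta : 'I_n.+1 -> rat) (s : 'I_n -> R) : R :=
  ratr (beta ord0) + \sum_(j < n) ratr (beta (lift ord0 j)) * s j.

Lemma psi_gt0 (R : realType) n (t1 : R) (s : 'I_n -> R) i : 0 < t1 -> 0 < psi t1 s i.
Proof. move=> h; rewrite /psi; case: unliftP => [j _|_] //; exact: powR_gt0. Qed.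

Lemma psi_powE (R : realType) n (beta : 'I_n.+1 -> rat) (t1 : R) (s : 'I_n -> R) :
  0 < t1 -> psi_pow beta t1 s = expR (Lf beta s * ln t1).
Proof.
move=> h; rewrite /psi_pow.
under eq_bigr => i _ do rewrite /powR gt_eqF ?psi_gt0 //.
rewrite -expR_sum; congr expR.
rewrite big_ord_recl /Lf mulrDl mulr_suml.
have -> : psi t1 s ord0 = t1 by rewrite /psi unlift_none.
congr (_ + _); apply: eq_bigr => j _.
rewrite /psi liftK ln_powR; ring.
Qed.

Theorem lemma4p4 (R : realType) (n : nat) (eps : R) (p q : 'I_n -> R)
  (beta : 'I_n.+1 -> rat) :
  0 < eps < 1 ->
  (forall j, 0 < p j < q j) ->
  (exists i, beta i != 0) ->
  (exists M : R, forall (t1 : R) (s : 'I_n -> R),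
      0 < t1 < eps -> in_box p q s -> `|psi_pow beta t1 s| <= M) ->
  exists p' q' : 'I_n -> R,
    (forall j, p j <= p' j /\ p' j < q' j /\ q' j <= q j) /\
    (forall e : R, 0 < e -> exists delta : R, 0 < delta /\
       forall (t1 : R) (s : 'I_n -> R),
         0 < t1 < delta -> t1 < eps -> in_box p' q' s ->
         `|psi_pow beta t1 s| < e).
Proof.
move=> /andP[he0 he1] hp [i0 hi0] [M hM].
have hA : forall s, in_box p q s -> 0 <= Lf beta s.
  move=> s hs; rewrite leNgt; apply/negP => hL.
  pose a := - Lf beta s.
  have ha : 0 < a by rewrite /a oppr_gt0.
  pose x := Num.max (M / a) (- ln eps) + 1.
  have hm1 : M / a <= Num.max (M / a) (- ln eps) by rewrite le_max lexx.
  have hm2 : - ln eps <= Num.max (M / a) (- ln eps) by rewrite le_max lexx orbT.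
  have hx1 : M / a < x by rewrite /x; lra.
  have hx2 : - ln eps < x by rewrite /x; lra.
  have hx1' : M < x * a by rewrite -ltr_pdivrMr.
  pose t1 := expR (- x).
  have ht1 : 0 < t1 by exact: expR_gt0.
  have ht1e : t1 < eps.
    have : expR (- x) < expR (ln eps) by rewrite ltr_expR; lra.
    by rewrite lnK // posrE.
  have := hM t1 s ltac:(by apply/andP) hs.
  rewrite psi_powE // /t1 expRK ger0_norm ?expR_ge0 //.
  have := expR_ge1Dx (Lf beta s * - x).
  rewrite /a in hx1' ha. move=> h1 h2. nra.
pose b j : R := ratr (beta (lift ord0 j)).
pose m j := (p j + q j) / 2.
have hmbox : in_box p q m by move=> j; have := hp j; rewrite /m => /andP[? ?]; apply/andP; split; lra.
have hLm := hA m hmbox.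
have hc : 0 < Lf beta m.
  case: (pselect (exists k, b k != 0)) => [[k hk]|hno].
    pose sk := if b k < 0 then (m k + q k) / 2 else (p k + m k) / 2.
    pose s' := fun j => if j == k then sk else m j.
    have hs' : in_box p q s'.
      move=> j; rewrite /s'; case: eqP => [->|_]; last exact: hmbox.
      have := hp k; rewrite /sk /m; case: ifP => _ /andP[? ?]; apply/andP; split; lra.
    have hE : Lf beta s' = Lf beta m + b k * (sk - m k).
      rewrite /Lf (bigD1 k) //= [in RHS](bigD1 k) //=.
      rewrite (eq_bigr (fun j => b j * m j)); last by move=> j /negbTE hj; rewrite /s' hj.
      rewrite /s' eqxx -/(b k); ring.
    have hneg : b k * (sk - m k) < 0.
      have := hp k; rewrite /sk /m; case: ifP => hb /andP[? ?].
        nra.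
      have hb' : 0 < b k by rewrite lt_neqAle eq_sym hk /= leNgt hb.
      nra.
    have := hA s' hs'; rewrite hE; lra.
  have hb0 : forall j, b j = 0.
    move=> j; apply/eqP; apply/negPn/negP => hj; apply: hno; by exists j.
  have hLe : Lf beta m = ratr (beta ord0).
    by rewrite /Lf big1 ?addr0 // => j _; rewrite -/(b j) hb0 mul0r.
  rewrite lt_neqAle hLm andbT eq_sym hLe fmorph_eq0.
  case: (unliftP ord0 i0) hi0 => [j ->|-> //] hj.
  have := hb0 j; rewrite /b => /eqP; rewrite fmorph_eq0 => /eqP hj0.
  by rewrite hj0 eqxx in hj.
pose c := Lf beta m.
pose p' j := if b j < 0 then p j else m j.
pose q' j := if b j < 0 then m j else q j.
have hlow : forall s, in_box p' q' s -> c <= Lf beta s.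
  move=> s hs; rewrite /c /Lf lerD2l; apply: ler_sum => j _.
  rewrite -/(b j); have := hs j; rewrite /p' /q'; case: ifP => hb /andP[h1 h2].
    nra.
  have hb' : 0 <= b j by rewrite leNgt hb.
  nra.
exists p', q'; split.
  move=> j; have := hp j; rewrite /p' /q' /m; case: ifP => _ /andP[? ?]; split; try split; lra.
move=> e he; exists (expR (ln e / c)); split; first exact: expR_gt0.
move=> t1 s /andP[h1 h2] h3 hs.
rewrite psi_powE // ger0_norm ?expR_ge0 //.
rewrite -[e in _ < e]lnK ?posrE // ltr_expR.
have hlt : ln t1 < 0 by apply: ln_lt0; apply/andP; split; lra.
have : ln t1 < ln e / c.
  by have := h2; rewrite -ltr_ln ?posrE ?expR_gt0 // expRK.
rewrite ltr_pdivlMr // => h4.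
have := hlow s hs; rewrite -/c => h5.
nra.
Qed.
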